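(* Let $G_{\max}=(V,E_{\max})$ be a finite, simple, connected, undirected graph, and let $\lambda',\mu',\gamma'>0$ with $\frac{\lambda'}{\mu'}>1$ and $0<\gamma'\le 1$ (Regime III). For a network state $\mathbf{A}$ (a subset $E(\mathbf{A})\subseteq E_{\max}$ of closed edges) let $g(E(\mathbf{A}))$ be the number of $C_3$ subgraphs (triangles) plus the number of $P_4$ subgraphs (paths with 4 vertices) formed by $E(\mathbf{A})$, and call a maximizer of $\pi(\mathbf{A})\propto(\lambda'/\mu')^{|E(\mathbf{A})|}\gamma'^{\,g(E(\mathbf{A}))}$ over all network states a most-probable network (for POD-DBP). If $\lambda'\gamma'<\mu'$, then the most-probable networks are exactly the network states $\mathbf{A}^*$ with $g(E(\mathbf{A}^* ))=0$ and $|E(\mathbf{A}^* )|$ maximum among such states; equivalently, $E(\mathbf{A}^* )$ is a maximum star matching of $G_{\max}$.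
   Context: A star graph is a graph consisting of a center vertex joined to all other vertices, with no other edges. A star matching of a graph $G=(V,E)$ is a subset of $E$ whose edges form a collection of vertex-disjoint (disconnected) star graphs; a maximum star matching is a star matching with the largest possible number of edges. *)

(* Defs.v *)
From HB Require Import structures.
From mathcomp Require Import all_boot all_order all_algebra.
Set Implicit Arguments. Unset Strict Implicit. Unset Printing Implicit Defensive.
Import Order.TTheory GRing.Theory Num.Theory.

Section Graphs.
Variable T : finType.
Implicit Types E S A B : {set {set T}}.

(* A simple graph on vertex set T is given by its edge set: a set of
   2-element subsets of T. *)
Definition simple_edges E : bool := [forall e in E, #|e| == 2].

Definition adj E : rel T := fun x y => [set x; y] \in E.

Definition connected_graph E : Prop := forall x y : T, connect (adj E) x y.

Definition is_C3 S : bool :=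
  [exists a : T, exists b : T, exists c : T,
     [&& a != b, b != c, a != c &
         S == [set [set a; b]; [set b; c]; [set a; c]]]].

Definition is_P4 S : bool :=
  [exists a : T, exists b : T, exists c : T, exists d : T,
     [&& [&& a != b, a != c, a != d, b != c, b != d & c != d] &
         S == [set [set a; b]; [set b; c]; [set c; d]]]].

Definition g E : nat :=
  #|[set S : {set {set T}} | (S \subset E) && is_C3 S]| +
  #|[set S : {set {set T}} | (S \subset E) && is_P4 S]|.

Definition verts S : {set T} := \bigcup_(e in S) e.

Definition is_star S : bool :=
  (S != set0) && [exists c : T, [forall e in S, c \in e]].

Definition star_matching A : Prop :=
  exists P : {set {set {set T}}},
    [/\ partition P A,
        (forall S : {set {set T}}, S \in P -> is_star S) &
        (forall S1 S2 : {set {set T}}, S1 \in P -> S2 \in P -> S1 != S2 ->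
            [disjoint verts S1 & verts S2])].

Definition max_star_matching (Emax A : {set {set T}}) : Prop :=
  [/\ A \subset Emax, star_matching A &
      forall B : {set {set T}}, B \subset Emax -> star_matching B -> #|B| <= #|A|].

Definition weight (R : realFieldType) (lam mu gam : R) E : R :=
  ((lam / mu) ^+ #|E| * gam ^+ g E)%R.

Definition most_probable (R : realFieldType) (lam mu gam : R) (Emax A : {set {set T}}) : Prop :=
  A \subset Emax /\
  forall B : {set {set T}}, B \subset Emax -> (weight lam mu gam B <= weight lam mu gam A)%R.

End Graphs.

(* Main.v *)
Require Import Defs.
From HB Require Import structures.
From mathcomp Require Import all_boot all_order all_algebra.
From mathcomp Require Import zify.
Import Order.TTheory GRing.Theory Num.Theory.

Section G.
Variable T : finType.
Implicit Types E S A B : {set {set T}}.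

Lemma g0_C3 E a b c : g E = 0 -> a != b -> b != c -> a != c ->
  [set a; b] \in E -> [set b; c] \in E -> [set a; c] \in E -> False.
Proof.
move=> /eqP; rewrite addn_eq0 => /andP[/eqP H _] ab bc ac e1 e2 e3.
have: [set [set a; b]; [set b; c]; [set a; c]] \in
   [set S : {set {set T}} | (S \subset E) && is_C3 S].
  rewrite inE; apply/andP; split.
    by apply/subsetP=> x; rewrite !inE => /orP[/orP[]|]/eqP->.
  apply/existsP; exists a; apply/existsP; exists b; apply/existsP; exists c.
  by rewrite ab bc ac eqxx.
by move/eqP: H; rewrite cards_eq0 => /eqP ->; rewrite inE.
Qed.

Lemma g0_P4 E a b c d : g E = 0 ->
  [&& a != b, a != c, a != d, b != c, b != d & c != d] ->
  [set a; b] \in E -> [set b; c] \in E -> [set c; d] \in E -> False.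
Proof.
move=> /eqP; rewrite addn_eq0 => /andP[_ /eqP H] dd e1 e2 e3.
have: [set [set a; b]; [set b; c]; [set c; d]] \in
   [set S : {set {set T}} | (S \subset E) && is_P4 S].
  rewrite inE; apply/andP; split.
    by apply/subsetP=> x; rewrite !inE => /orP[/orP[]|]/eqP->.
  apply/existsP; exists a; apply/existsP; exists b; apply/existsP; exists c.
  apply/existsP; exists d.
  by rewrite dd eqxx.
by move/eqP: H; rewrite cards_eq0 => /eqP ->; rewrite inE.
Qed.

Lemma card_sub (P : pred {set {set T}}) E1 E2 : E1 \subset E2 ->
  #|[set S : {set {set T}} | (S \subset E1) && P S]| <= #|[set S : {set {set T}} | (S \subset E2) && P S]|.
Proof.
move=> s; apply: subset_leq_card; apply/subsetP => S; rewrite !inE.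
by case/andP => h ->; rewrite (subset_trans h s).
Qed.

Lemma card_rem (P : pred {set {set T}}) E S e : S \subset E -> P S -> e \in S ->
  #|[set S : {set {set T}} | (S \subset E :\ e) && P S]| < #|[set S : {set {set T}} | (S \subset E) && P S]|.
Proof.
move=> sE pS eS; apply: proper_card; apply/properP; split.
  apply/subsetP => X; rewrite !inE => /andP[h ->].
  by rewrite (subset_trans h) ?subsetDl.
exists S; first by rewrite inE sE pS.
rewrite inE pS andbT; apply/negP => /subsetP /(_ e eS).
by rewrite !inE eqxx ?orbT.
Qed.

Lemma g_sub E1 E2 : E1 \subset E2 -> g E1 <= g E2.
Proof. by move=> s; rewrite /g leq_add ?card_sub. Qed.

Lemma g_remove E : 0 < g E -> exists2 e, e \in E & g (E :\ e) < g E.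
Proof.
rewrite /g.
have h1 := @card_sub (@is_C3 T) (E :\ _) E (subsetDl _ _).
have h2 := @card_sub (@is_P4 T) (E :\ _) E (subsetDl _ _).
case: (posnP #|[set S : {set {set T}} | (S \subset E) && is_C3 S]|) => [z1|p1].
  rewrite z1 add0n card_gt0 => /set0Pn [S]; rewrite inE => /andP[sE pS].
  move: (pS) => /existsP[a /existsP[b /existsP[c /existsP[d /andP[_ /eqP SE]]]]].
  have eS : [set a; b] \in S by rewrite SE !inE eqxx.
  exists [set a; b]; first by apply: (subsetP sE).
  have := @card_rem _ _ _ _ sE pS eS; move: (h1 [set a; b]); lia.
move: (p1); rewrite card_gt0 => /set0Pn [S]; rewrite inE => /andP[sE pS] _.
move: (pS) => /existsP[a /existsP[b /existsP[c /andP[_ /andP[_ /andP[_ /eqP SE]]]]]].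
have eS : [set a; b] \in S by rewrite SE !inE eqxx.
exists [set a; b]; first by apply: (subsetP sE).
have := @card_rem _ _ _ _ sE pS eS; move: (h2 [set a; b]); lia.
Qed.


Lemma two_elt (e : {set T}) x : #|e| = 2 -> x \in e -> exists2 y, y != x & e = [set x; y].
Proof.
move/eqP/cards2P => [u [v [uv ->]]]; rewrite !inE => /orP[]/eqP->.
  by exists v; rewrite // eq_sym.
by exists u => //; rewrite setUC.
Qed.

Lemma two_eq (e : {set T}) x y : #|e| = 2 -> x \in e -> y \in e -> x != y -> e = [set x; y].
Proof.
move=> c2 xe ye xy; apply/eqP; rewrite eq_sym eqEcard cards2 xy c2 andbT.
by apply/subsetP => z; rewrite !inE => /orP[]/eqP->.
Qed.

Lemma star_g0 A : star_matching A -> g A = 0.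
Proof.
case=> P [/and3P[/eqP cov _ _] st dis].
have blk : forall e f x, e \in A -> f \in A -> x \in e -> x \in f ->
    pblock P e = pblock P f.
  move=> e f x eA fA xe xf; apply/eqP; apply/negPn/negP => ne.
  have eP : e \in cover P by rewrite cov.
  have fP : f \in cover P by rewrite cov.
  have := dis _ _ (pblock_mem eP) (pblock_mem fP) ne.
  move/disjointFr => /(_ x); rewrite (_ : x \in verts _ = true).
    move=> /(_ isT); rewrite (_ : x \in verts _ = true) //.
    by apply/bigcupP; exists f; rewrite ?mem_pblock.
  by apply/bigcupP; exists e; rewrite ?mem_pblock.
have cen : forall e, e \in A -> exists c, forall f, f \in A ->
    pblock P f = pblock P e -> c \in f.
  move=> e eA; have eP : e \in cover P by rewrite cov.
  case/andP: (st _ (pblock_mem eP)) => _ /existsP[c /forall_inP H].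
  exists c => f fA fe; apply: H; rewrite -fe mem_pblock cov //.
rewrite /g; apply/eqP; rewrite addn_eq0 !cards_eq0; apply/andP; split;
  apply/eqP/setP => S; rewrite !inE; apply/negbTE/negP => /andP[sub].
  move=> /existsP[a /existsP[b /existsP[c /andP[ab /andP[bc /andP[ac /eqP SE]]]]]].
  subst S.
  have e1 : [set a; b] \in A by apply: (subsetP sub); rewrite !inE eqxx ?orbT.
  have e2 : [set b; c] \in A by apply: (subsetP sub); rewrite !inE eqxx ?orbT.
  have e3 : [set a; c] \in A by apply: (subsetP sub); rewrite !inE eqxx ?orbT.
  have b12 := blk _ _ b e1 e2 ltac:(by rewrite !inE eqxx ?orbT) ltac:(by rewrite !inE eqxx ?orbT).
  have b23 := blk _ _ c e2 e3 ltac:(by rewrite !inE eqxx ?orbT) ltac:(by rewrite !inE eqxx ?orbT).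
  have [z Hz] := cen _ e1.
  have z1 := Hz _ e1 erefl.
  have z2 := Hz _ e2 (esym b12).
  have z3 := Hz _ e3 (etrans (esym b23) (esym b12)).
  move: z1 z2 z3; rewrite !inE.
  by case/orP=> /eqP ->; rewrite ?eqxx ?(negbTE ab) ?(negbTE bc) ?(negbTE ac)
     ?(eq_sym b a) ?(eq_sym c b) ?(eq_sym c a) ?(negbTE ab) ?(negbTE bc) ?(negbTE ac).
move=> /existsP[a /existsP[b /existsP[c /existsP[d /andP[dd /eqP SE]]]]].
subst S.
have e1 : [set a; b] \in A by apply: (subsetP sub); rewrite !inE eqxx ?orbT.
have e2 : [set b; c] \in A by apply: (subsetP sub); rewrite !inE eqxx ?orbT.
have e3 : [set c; d] \in A by apply: (subsetP sub); rewrite !inE eqxx ?orbT.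
have b12 := blk _ _ b e1 e2 ltac:(by rewrite !inE eqxx ?orbT) ltac:(by rewrite !inE eqxx ?orbT).
have b23 := blk _ _ c e2 e3 ltac:(by rewrite !inE eqxx ?orbT) ltac:(by rewrite !inE eqxx ?orbT).
have [z Hz] := cen _ e1.
have z1 := Hz _ e1 erefl.
have z3 := Hz _ e3 (etrans (esym b23) (esym b12)).
move: z1 z3 dd; rewrite !inE.
by case/orP=> /eqP ->; case/orP=> /eqP ->; rewrite ?eqxx ?andbF.
Qed.


Definition rr : rel {set T} := fun e f => e :&: f != set0.

Section G0.
Variable B : {set {set T}}.
Hypothesis c2 : forall e, e \in B -> #|e| = 2.
Hypothesis g0 : g B = 0.

Lemma rr_refl e : e \in B -> rr e e.
Proof. by move=> eB; rewrite /rr setIid -card_gt0 c2. Qed.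

Lemma rr_sym e f : rr e f = rr f e.
Proof. by rewrite /rr setIC. Qed.

Lemma rr_trans e1 e2 e3 : e1 \in B -> e2 \in B -> e3 \in B ->
  rr e1 e2 -> rr e2 e3 -> rr e1 e3.
Proof.
move=> b1 b2 b3 /set0Pn[x]; rewrite inE => /andP[x1 x2].
move=> /set0Pn[y]; rewrite inE => /andP[y2 y3].
case: (eqVneq x y) => [exy|nxy].
  by subst y; apply/set0Pn; exists x; rewrite inE x1.
case: (boolP (x \in e3)) => [x3|nx3].
  by apply/set0Pn; exists x; rewrite inE x1.
have [a ax E1] := @two_elt _ _ (c2 _ b1) x1.
case: (boolP (a \in e3)) => [a3|na3].
  by apply/set0Pn; exists a; rewrite inE a3 E1 !inE eqxx orbT.
have [d dy E3] := @two_elt _ _ (c2 _ b3) y3.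
have E2 := @two_eq _ _ _ (c2 _ b2) x2 y2 nxy.
exfalso; apply: (@g0_P4 B a x y d g0).
- have ay : a != y by apply: contraNneq na3 => ->.
  have ad : a != d by apply: contraNneq na3 => ->; rewrite E3 !inE eqxx orbT.
  have xd : x != d by apply: contraNneq nx3 => ->; rewrite E3 !inE eqxx orbT.
  by rewrite ax ay ad nxy xd eq_sym dy.
- by rewrite setUC -E1.
- by rewrite -E2.
- by rewrite -E3.
Qed.

Lemma g0_sm : star_matching B.
Proof.
have eqR : {in B & &, equivalence_rel rr}.
  move=> x y z xB yB zB; split; first exact: rr_refl.
  move=> rxy; apply/idP/idP => h.
    by apply: (@rr_trans _ _ _ yB xB zB) => //; rewrite rr_sym.
  exact: (@rr_trans _ _ _ xB yB zB).
exists (equivalence_partition rr B); split.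
- exact: equivalence_partitionP.
- move=> S /imsetP[x xB ->]; apply/andP; split.
    by apply/set0Pn; exists x; rewrite inE xB rr_refl.
  have /eqP/cards2P[a [b [ab Ex]]] := c2 _ xB.
  case: (boolP [forall h in [set y in B | rr x y], a \in h]) => [Ha|].
    by apply/existsP; exists a.
  move/forall_inPn => [f]; rewrite inE => /andP[fB rxf] af.
  apply/existsP; exists b; apply/forall_inP => h; rewrite inE => /andP[hB rxh].
  apply/negPn/negP => bh.
  have bf : b \in f.
    move: rxf => /set0Pn[z]; rewrite inE Ex !inE => /andP[/orP[]/eqP -> //].
    by rewrite (negbTE af).
  have [c cb Ef] := @two_elt _ _ (c2 _ fB) bf.
  have ca : c != a by apply: contraNneq af => <-; rewrite Ef !inE eqxx orbT.
  have ah : a \in h.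
    move: rxh => /set0Pn[z]; rewrite inE Ex !inE => /andP[/orP[]/eqP -> //].
    by rewrite (negbTE bh).
  have rhf : rr h f by apply: (@rr_trans _ _ _ hB xB fB) => //; rewrite rr_sym.
  have ch : c \in h.
    move: rhf => /set0Pn[z]; rewrite inE Ef !inE => /andP[zh /orP[]/eqP ez].
      by move: zh; rewrite ez (negbTE bh).
    by rewrite -ez.
  have ac : a != c by rewrite eq_sym.
  have Eh := @two_eq _ _ _ (c2 _ hB) ah ch ac.
  apply: (@g0_C3 B a b c g0 ab _ ac).
  - by rewrite eq_sym.
  - by rewrite -Ex.
  - by rewrite -Ef.
  - by rewrite -Eh.
- move=> S1 S2 /imsetP[x1 x1B ->] /imsetP[x2 x2B ->] ne.
  rewrite -setI_eq0; apply/eqP/setP => v; rewrite !inE.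
  apply/negbTE/negP => /andP[/bigcupP[e eS1 ve] /bigcupP[f fS2 vf]].
  move: eS1 fS2; rewrite !inE => /andP[eB r1] /andP[fB r2].
  have ref : rr e f by apply/set0Pn; exists v; rewrite inE ve.
  have r12 : rr x1 x2.
    apply: (@rr_trans _ _ _ x1B fB x2B); last by rewrite rr_sym.
    exact: (@rr_trans _ _ _ x1B eB fB).
  move/negP: ne; apply; apply/eqP/setP => y; rewrite !inE.
  case: (boolP (y \in B)) => //= yB; apply/idP/idP => h.
    by apply: (@rr_trans _ _ _ x2B x1B yB) => //; rewrite rr_sym.
  exact: (@rr_trans _ _ _ x1B x2B yB).
Qed.

End G0.
End G.

Section W.
Variables (R : realFieldType) (T : finType) (lam mu gam : R).
Hypotheses (lam0 : (0 < lam)%R) (mu0 : (0 < mu)%R) (gam0 : (0 < gam)%R)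
  (r1 : (1 < lam / mu)%R) (gam1 : (gam <= 1)%R) (rg : (lam * gam < mu)%R).

Let w (E : {set {set T}}) := weight lam mu gam E.

Lemma rg1 : (lam / mu * gam < 1)%R.
Proof. by rewrite mulrAC ltr_pdivrMr // mul1r. Qed.

Lemma step (E : {set {set T}}) e : e \in E -> g (E :\ e) < g E -> (w E < w (E :\ e))%R.
Proof.
move=> eE lt; rewrite /w /weight (cardsD1 e E) eE add1n exprS.
set r := (lam / mu)%R; set m := #|E :\ e|.
have -> : g E = (g (E :\ e) + (g E - g (E :\ e)))%N by rewrite subnKC // ltnW.
set k := g (E :\ e); set d := (g E - k)%N.
have d0 : (0 < d)%N by rewrite subn_gt0.
have r0 : (0 < r)%R by rewrite divr_gt0.
rewrite exprD.
rewrite (_ : (r * r ^+ m * (gam ^+ k * gam ^+ d) = (r ^+ m * gam ^+ k) * (r * gam ^+ d))%R);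
  last by rewrite (mulrC r) mulrACA.
rewrite gtr_pMr; last by rewrite mulr_gt0 // exprn_gt0.
apply: (le_lt_trans _ rg1); rewrite -/r ler_pM2l //.
by rewrite ler_iXnr // ltW.
Qed.

Lemma reduce (E : {set {set T}}) : exists E' : {set {set T}}, [/\ E' \subset E, g E' = 0,
   (w E <= w E')%R & (0 < g E -> (w E < w E')%R)].
Proof.
have [n lt] := ubnP #|E|; elim: n E lt => // n IH E lt.
case: (posnP (g E)) => [z|p].
  by exists E; rewrite z lexx subxx.
have [e eE ge] := @g_remove _ _ p.
have lt' : #|E :\ e| < n by move: lt; rewrite (cardsD1 e E) eE add1n ltnS.
have [E' [s z le _]] := IH _ lt'.
have st := @step E e eE ge.
exists E'; split => //.
- exact: (subset_trans s (subsetDl _ _)).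
- exact: (ltW (lt_le_trans st le)).
- by move=> _; exact: (lt_le_trans st le).
Qed.

Lemma w0 (E : {set {set T}}) : g E = 0 -> w E = ((lam / mu) ^+ #|E|)%R.
Proof. by move=> z; rewrite /w /weight z expr0 mulr1. Qed.

End W.
Theorem theorem8 (R : realFieldType) (T : finType) (Emax : {set {set T}})
    (lam mu gam : R) :
  simple_edges Emax -> connected_graph Emax ->
  (0 < lam)%R -> (0 < mu)%R -> (0 < gam)%R ->
  (1 < lam / mu)%R -> (gam <= 1)%R ->
  (lam * gam < mu)%R ->
  forall A : {set {set T}}, A \subset Emax ->
    (most_probable lam mu gam Emax A <->
       (g A = 0%N /\
        forall B : {set {set T}}, B \subset Emax -> g B = 0%N -> #|B| <= #|A|))
    /\
    ((g A = 0%N /\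
        forall B : {set {set T}}, B \subset Emax -> g B = 0%N -> #|B| <= #|A|)
       <-> max_star_matching Emax A).
Proof.
move=> se _ l0 m0 g0 r1 g1 rg A sA.
have HS : forall B : {set {set T}}, B \subset Emax -> (g B = 0 <-> star_matching B).
  move=> B sB; split; last exact: star_g0.
  apply: g0_sm => e eB; apply/eqP; move/forall_inP: se; apply.
  exact: (subsetP sB).
have red := @reduce R T lam mu gam l0 m0 g0 g1 rg.
split; last first.
  split.
    case=> gA H; split => //; first by apply/HS.
    by move=> B sB /(HS _ sB) /H; apply.
  case=> _ /(HS _ sA) gA H; split => // B sB /(HS _ sB) gB; exact: H.
split.
  case=> _ H.
  have gA : g A = 0.
    case: (posnP (g A)) => // p.
    have [E' [s z le lt]] := red A.
    have := H E' (subset_trans s sA).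
    by move: (lt p) => /lt_le_trans h /h; rewrite ltxx.
  split => // B sB gB.
  by have := H B sB; rewrite (@w0 _ _ lam mu gam _ gB) (@w0 _ _ lam mu gam _ gA) ler_eXn2l.
case=> gA H; split => // B sB.
have [E' [s z le _]] := red B.
apply: (le_trans le); rewrite (@w0 _ _ lam mu gam _ z) (@w0 _ _ lam mu gam _ gA) ler_eXn2l //.
by apply: H => //; apply: subset_trans s sB.
Qed.
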